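(* Let $A$ be an algebra whose commutator is commutative and distributive w.r.t. arbitrary joins and such that $[\theta,\nabla_A]_A=\theta$ for all $\theta\in\mathrm{Con}(A)$. Then: (a) if $A$ is strongly Baer, then $A$ is semiprime; (b) if $A$ is Baer and has principal commutators, then $A$ is semiprime.
   Context: Let $A$ be an algebra of a fixed signature. $\mathrm{Con}(A)$ is the complete lattice of congruences of $A$, with bottom $\Delta_A$ and top $\nabla_A=A^2$; $\mathrm{PCon}(A)$ is the set of principal congruences of $A$. $[\cdot,\cdot]_A$ is the term condition commutator: for $\alpha,\beta,\mu\in\mathrm{Con}(A)$, $C(\alpha,\beta;\mu)$ means that for all $n,k$, every $(n+k)$-ary term $t$, all $(a_i,b_i)\in\alpha$ and $(c_j,d_j)\in\beta$: $(t(\bar a,\bar c),t(\bar a,\bar d))\in\mu$ iff $(t(\bar b,\bar c),t(\bar b,\bar d))\in\mu$; $[\alpha,\beta]_A=\bigcap\{\mu: C(\alpha,\beta;\mu)\}$; it satisfies $[\alpha,\beta]_A\subseteq\alpha\cap\beta$. ''The commutator of $A$ is commutative and distributive w.r.t. arbitrary joins'' means $[\alpha,\beta]_A=[\beta,\alpha]_A$ and $[\bigvee_{i}\alpha_i,\beta]_A=\bigvee_{i}[\alpha_i,\beta]_A$ for all families. Set $[\alpha,\beta]^1_A=[\alpha,\beta]_A$ and $[\alpha,\beta]^{n+1}_A=[[\alpha,\beta]^n_A,[\alpha,\beta]^n_A]_A$. A congruence $\phi\neq\nabla_A$ is prime if $[\alpha,\beta]_A\subseteq\phi$ implies $\alpha\subseteq\phi$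 or $\beta\subseteq\phi$; $\rho_A(\theta)$ is the intersection of all prime congruences containing $\theta$ ($\nabla_A$ if none); $A$ is semiprime if $\rho_A(\Delta_A)=\Delta_A$. For $\beta\in\mathrm{Con}(A)$, $\beta^\perp=\bigvee\{\alpha\in\mathrm{Con}(A):[\alpha,\beta]_A=\Delta_A\}$. $\mathcal B(\mathrm{Con}(A))$ is the set of complemented elements of the lattice $\mathrm{Con}(A)$. $A$ is strongly Baer iff $\theta^\perp\in\mathcal B(\mathrm{Con}(A))$ for all $\theta\in\mathrm{Con}(A)$, and Baer iff $\theta^\perp\in\mathcal B(\mathrm{Con}(A))$ for all $\theta\in\mathrm{PCon}(A)$. $A$ has principal commutators iff $[\alpha,\beta]_A\in\mathrm{PCon}(A)$ for all $\alpha,\beta\in\mathrm{PCon}(A)$. *)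

(* Defs.v *)
From mathcomp Require Import all_boot.
Set Implicit Arguments. Unset Strict Implicit. Unset Printing Implicit Defensive.

Record signature := Signature { sym : Type; arity : sym -> nat }.

Record algebra (S : signature) := Algebra {
  carrier :> Type;
  op : forall f : sym S, ('I_(arity f) -> carrier) -> carrier }.

Section UA.
Variable S : signature.
Variable A : algebra S.

Definition crel := A -> A -> Prop.

Definition incl (r s : crel) : Prop := forall x y, r x y -> s x y.
Definition req (r s : crel) : Prop := forall x y, r x y <-> s x y.

Definition Delta : crel := fun x y => x = y.
Definition Nabla : crel := fun _ _ => True.
Definition cmeet (r s : crel) : crel := fun x y => r x y /\ s x y.

Definition is_con (r : crel) : Prop :=
  (forall x, r x x) /\ (forall x y, r x y -> r y x) /\
  (forall x y z, r x y -> r y z -> r x z) /\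
  (forall (f : sym S) (a b : 'I_(arity f) -> A),
      (forall i, r (a i) (b i)) -> r (op a) (op b)).

Definition cjoin (I : Type) (fam : I -> crel) : crel :=
  fun x y => forall mu, is_con mu -> (forall i, incl (fam i) mu) -> mu x y.

Definition cjoin2 (r s : crel) : crel := cjoin (fun b : bool => if b then r else s).

Definition Cg (a b : A) : crel := cjoin (fun _ : unit => fun x y => x = a /\ y = b).
Definition is_pcon (r : crel) : Prop := exists a b, req r (Cg a b).

Inductive term (X : Type) : Type :=
| Var : X -> term X
| App : forall f : sym S, ('I_(arity f) -> term X) -> term X.

Fixpoint eval (X : Type) (env : X -> A) (t : term X) : A :=
  match t with
  | Var x => env x
  | App f ts => op (fun i => eval env (ts i))
  end.

Definition env2 (n k : nat) (a : 'I_n -> A) (c : 'I_k -> A) : 'I_n + 'I_k -> A :=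
  fun v => match v with inl i => a i | inr j => c j end.

Definition TC (alpha beta mu : crel) : Prop :=
  forall (n k : nat) (t : term ('I_n + 'I_k)) (a b : 'I_n -> A) (c d : 'I_k -> A),
    (forall i, alpha (a i) (b i)) -> (forall j, beta (c j) (d j)) ->
    (mu (eval (env2 a c) t) (eval (env2 a d) t) <->
     mu (eval (env2 b c) t) (eval (env2 b d) t)).

Definition comm (alpha beta : crel) : crel :=
  fun x y => forall mu, is_con mu -> TC alpha beta mu -> mu x y.

Definition comm_commutative : Prop :=
  forall alpha beta, is_con alpha -> is_con beta -> req (comm alpha beta) (comm beta alpha).

Definition comm_join_distributive : Prop :=
  forall (I : Type) (fam : I -> crel) (beta : crel),
    (forall i, is_con (fam i)) -> is_con beta ->
    req (comm (cjoin fam) beta) (cjoin (fun i => comm (fam i) beta)).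

Definition is_prime (phi : crel) : Prop :=
  is_con phi /\ ~ req phi Nabla /\
  forall alpha beta, is_con alpha -> is_con beta ->
    incl (comm alpha beta) phi -> incl alpha phi \/ incl beta phi.

Definition rho (theta : crel) : crel :=
  fun x y => forall phi, is_prime phi -> incl theta phi -> phi x y.

Definition semiprime : Prop := req (rho Delta) Delta.

Definition perp (beta : crel) : crel :=
  cjoin (fun s : {alpha : crel | is_con alpha /\ req (comm alpha beta) Delta} => proj1_sig s).

Definition complemented (alpha : crel) : Prop :=
  exists beta, is_con beta /\ req (cmeet alpha beta) Delta /\ req (cjoin2 alpha beta) Nabla.

Definition strongly_Baer : Prop :=
  forall theta, is_con theta -> complemented (perp theta).

Definition Baer : Prop :=
  forall theta, is_pcon theta -> complemented (perp theta).

Definition principal_commutators : Prop :=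
  forall alpha beta, is_pcon alpha -> is_pcon beta -> is_pcon (comm alpha beta).

End UA.

(* Main.v *)
Require Import Defs.
From mathcomp Require Import all_boot.
From mathcomp Require Import boolp classical_sets.
From Stdlib Require Import ClassicalEpsilon FunctionalExtensionality Lia PeanoNat.

Lemma cjoin_con {S} {A : algebra S} (I : Type) (fam : I -> crel A) : is_con (cjoin fam).
Proof.
unfold cjoin; split; [|split; [|split]].
- intros x mu [R _] _; apply R.
- intros x y H mu Hmu Hi; destruct Hmu as [R [Sy [T O]]]; apply Sy, (H mu (conj R (conj Sy (conj T O))) Hi).
- intros x y z H1 H2 mu Hmu Hi; pose proof Hmu as Hm; destruct Hm as [R [Sy [T O]]];
  eapply T; [apply (H1 mu Hmu Hi)| apply (H2 mu Hmu Hi)].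
- intros f a b H mu Hmu Hi; pose proof Hmu as Hm; destruct Hm as [R [Sy [T O]]];
  apply O; intros i; apply (H i mu Hmu Hi).
Qed.

Lemma cjoin_least {S} {A : algebra S} (I : Type) (fam : I -> crel A) mu :
  is_con mu -> (forall i, incl (fam i) mu) -> incl (cjoin fam) mu.
Proof. intros Hm Hi x y H; apply H; auto. Qed.

Lemma cjoin_ub {S} {A : algebra S} (I : Type) (fam : I -> crel A) i :
  incl (fam i) (cjoin fam).
Proof. intros x y H mu _ Hi; apply (Hi i); auto. Qed.

Lemma Delta_con {S} (A : algebra S) : is_con (@Delta S A).
Proof.
unfold Delta; split; [|split; [|split]]; intros; subst; auto.
f_equal; apply functional_extensionality; auto.
Qed.

Lemma Nabla_con {S} (A : algebra S) : is_con (@Nabla S A).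
Proof. unfold Nabla; split; [|split; [|split]]; intros; auto. Qed.

Lemma Cg_least {S} {A : algebra S} (a b : A) mu : is_con mu -> mu a b -> incl (Cg a b) mu.
Proof. intros Hm H. apply cjoin_least; auto. intros _ x y [-> ->]; auto. Qed.

Lemma Cg_in {S} {A : algebra S} (a b : A) : Cg a b a b.
Proof. apply (cjoin_ub _ (fun _ : unit => fun x y : A => x = a /\ y = b) tt); auto. Qed.

Lemma comm_con {S} {A : algebra S} (al be : crel A) : is_con (comm al be).
Proof.
unfold comm; split; [|split; [|split]].
- intros x mu [R _] _; apply R.
- intros x y H mu Hmu Hi; pose proof Hmu as Hm; destruct Hm as [R [Sy [T O]]]; apply Sy, (H mu Hmu Hi).
- intros x y z H1 H2 mu Hmu Hi; pose proof Hmu as Hm; destruct Hm as [R [Sy [T O]]];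
  eapply T; [apply (H1 mu Hmu Hi)| apply (H2 mu Hmu Hi)].
- intros f a b H mu Hmu Hi; pose proof Hmu as Hm; destruct Hm as [R [Sy [T O]]];
  apply O; intros i; apply (H i mu Hmu Hi).
Qed.

Lemma comm_mono {S} {A : algebra S} (al be al' be' : crel A) :
  incl al al' -> incl be be' -> incl (comm al be) (comm al' be').
Proof.
intros H1 H2 x y H mu Hmu HT. apply H; auto.
intros n k t a b c d Ha Hc. apply HT; intros; auto.
Qed.

Lemma eval_con {S} {A : algebra S} (r : crel A) X (e1 e2 : X -> A) (t : term S X) :
  is_con r -> (forall x, r (e1 x) (e2 x)) -> r (eval e1 t) (eval e2 t).
Proof.
intros Hr He. induction t as [x|f ts IH]; simpl; auto.
destruct Hr as [_ [_ [_ O]]]; apply O; auto.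
Qed.

Lemma comm_le_l {S} {A : algebra S} (al be : crel A) : is_con al -> incl (comm al be) al.
Proof.
intros Hal x y H; apply H; auto.
intros n k t a b c d Ha Hc.
pose proof Hal as Hm; destruct Hm as [R [Sy [T O]]].
assert (E1 : al (eval (env2 a c) t) (eval (env2 b c) t)).
{ apply eval_con; auto. intros [i|j]; simpl; auto. }
assert (E2 : al (eval (env2 a d) t) (eval (env2 b d) t)).
{ apply eval_con; auto. intros [i|j]; simpl; auto. }
split; intros H0; eauto.
Qed.

Lemma comm_le_r {S} {A : algebra S} (al be : crel A) : is_con be -> incl (comm al be) be.
Proof.
intros Hbe x y H; apply H; auto.
intros n k t a b c d Ha Hc.
assert (E1 : be (eval (env2 a c) t) (eval (env2 a d) t)).
{ apply eval_con; auto. intros [i|j]; simpl; [apply (proj1 Hbe)|auto]. }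
assert (E2 : be (eval (env2 b c) t) (eval (env2 b d) t)).
{ apply eval_con; auto. intros [i|j]; simpl; [apply (proj1 Hbe)|auto]. }
tauto.
Qed.

Lemma key {S} {A : algebra S} (al : crel A) :
  comm_commutative A -> comm_join_distributive A ->
  (forall theta, is_con theta -> req (comm theta (@Nabla S A)) theta) ->
  is_con al -> complemented (perp al) -> req (comm al al) (@Delta S A) ->
  incl al (@Delta S A).
Proof.
intros Hc Hd Hn Hal [g [Hg [Hm Hj]]] Hz.
set P := perp al.
assert (HP : is_con P) by apply cjoin_con.
assert (alP : incl al P).
{ unfold P, perp. exact (cjoin_ub _ (fun s : {alpha : crel A | is_con alpha /\ req (comm alpha al) (@Delta S A)} => proj1_sig s)
     (exist _ al (conj Hal Hz))). }
assert (PA : incl (comm P al) (@Delta S A)).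
{ intros x y H. unfold P, perp in H.
  apply (proj1 (Hd _ (fun s : {alpha : crel A | is_con alpha /\ req (comm alpha al) (@Delta S A)} => proj1_sig s) al
     (fun i => proj1 (proj2_sig i)) Hal x y)) in H.
  revert H; apply cjoin_least; [apply Delta_con|].
  intros i u v Hu; exact (proj1 (proj2 (proj2_sig i) u v) Hu). }
intros x y H.
apply (Hn al Hal) in H.
assert (H2 : comm al (cjoin2 P g) x y).
{ revert H; apply comm_mono; [intros u v; auto|]. intros u v _; apply Hj; exact I. }
apply (proj1 (Hc al (cjoin2 P g) Hal (cjoin_con _ _) x y)) in H2.
unfold cjoin2 in H2.
apply (proj1 (Hd _ (fun b : bool => if b then P else g) al (fun b => if b as b0 return is_con (if b0 then P else g) then HP else Hg) Hal x y)) in H2.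
revert H2; apply cjoin_least; [apply Delta_con|].
intros [|] u v Hu; [apply PA; exact Hu|].
apply (proj1 (Hm u v)); split; [apply alP; apply (comm_le_r g al Hal); exact Hu| apply (comm_le_l g al Hg); exact Hu].
Qed.

Lemma comm_join_phi {S} {A : algebra S} (be ga phi : crel A) :
  comm_commutative A -> comm_join_distributive A ->
  is_con be -> is_con ga -> is_con phi -> incl (comm be ga) phi ->
  incl (comm (cjoin2 be phi) (cjoin2 ga phi)) phi.
Proof.
intros Hc Hd Hb Hg Hp Hs x y H.
unfold cjoin2 in H at 1.
apply (proj1 (Hd _ (fun b : bool => if b then be else phi) (cjoin2 ga phi)
  (fun b => if b as b0 return is_con (if b0 then be else phi) then Hb else Hp) (cjoin_con _ _) x y)) in H.
revert H; apply cjoin_least; auto.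
intros [|] u v Hu; [|exact (comm_le_l phi (cjoin2 ga phi) Hp u v Hu)].
apply (proj1 (Hc be (cjoin2 ga phi) Hb (cjoin_con _ _) u v)) in Hu.
unfold cjoin2 in Hu.
apply (proj1 (Hd _ (fun b : bool => if b then ga else phi) be
  (fun b => if b as b0 return is_con (if b0 then ga else phi) then Hg else Hp) Hb u v)) in Hu.
revert Hu; apply cjoin_least; auto.
intros [|] p q Hpq; [|exact (comm_le_l phi be Hp p q Hpq)].
apply Hs. exact (proj1 (Hc ga be Hg Hb p q) Hpq).
Qed.

Lemma semiprime_of {S} (A : algebra S) :
  comm_commutative A -> comm_join_distributive A ->
  (forall a b : A, req (comm (Cg a b) (Cg a b)) (@Delta S A) -> a = b) -> semiprime A.
Proof.
intros Hc Hd H x y; split; last first.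
{ intros Hxy phi [Hphi _] _. destruct Hphi as [R _]. rewrite Hxy; apply R. }
intros Hr. destruct (classic (x = y)) as [|Hne]; [assumption|]. exfalso.
pose NP := {p : A * A | p.1 <> p.2}.
assert (step : forall p : NP, {q : NP | comm (Cg (proj1_sig p).1 (proj1_sig p).2)
   (Cg (proj1_sig p).1 (proj1_sig p).2) (proj1_sig q).1 (proj1_sig q).2}).
{ intros [[a b] Hab]; apply constructive_indefinite_description; simpl.
  destruct (classic (exists u v, comm (Cg a b) (Cg a b) u v /\ u <> v)) as [[u [v [H1 H2]]]|Hn].
  - exists (exist _ (u, v) H2); exact H1.
  - exfalso; apply Hab; apply H; intros u v; split.
    + intros Hc1; destruct (classic (u = v)) as [|Huv]; auto. exfalso; apply Hn; eauto.
    + intros ->; apply (proj1 (comm_con _ _)). }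
pose sq := fun n => Nat.iter n (fun p => proj1_sig (step p)) (exist _ (x, y) Hne : NP).
pose al := fun n => Cg (proj1_sig (sq n)).1 (proj1_sig (sq n)).2.
assert (F1 : forall n, incl (al n.+1) (comm (al n) (al n))).
{ intros n; apply Cg_least; [apply comm_con|]. exact (proj2_sig (step (sq n))). }
assert (F2 : forall n, incl (al n.+1) (al n)).
{ intros n u v Hu; apply (comm_le_l _ (al n) (cjoin_con _ _)); apply F1; exact Hu. }
assert (F3 : forall n k, (n <= k)%coq_nat -> incl (al k) (al n)).
{ intros n k Hk; induction Hk as [|k Hk IH]; [intros u v; auto|].
  intros u v Hu; apply IH, F2, Hu. }
assert (F4 : forall n mu, is_con mu -> incl (al n) mu -> mu (proj1_sig (sq n)).1 (proj1_sig (sq n)).2).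
{ intros n mu Hmu Hi; apply Hi, Cg_in. }
pose T := {r : crel A | is_con r /\ forall n, ~ incl (al n) r}.
pose R := fun s t : T => `[< incl (proj1_sig s) (proj1_sig t) >].
assert (Dav : forall n, ~ incl (al n) (@Delta S A)).
{ intros n Hi. apply (proj2_sig (sq n)). exact (F4 n _ (Delta_con A) Hi). }
destruct (@ZL_preorder T (exist _ (@Delta S A) (conj (Delta_con A) Dav)) R) as [t Ht].
- intros s; apply/asboolP; intros u v; auto.
- move=> r s t0 /asboolP H1 /asboolP H2; apply/asboolP; intros u v Hu; auto.
- intros Ch Htot.
  pose U := fun u v : A => u = v \/ exists s, Ch s /\ proj1_sig s u v.
  assert (tot : forall s1 s2, Ch s1 -> Ch s2 -> incl (proj1_sig s1) (proj1_sig s2) \/ incl (proj1_sig s2) (proj1_sig s1)).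
  { intros s1 s2 C1 C2; destruct (Htot s1 s2 C1 C2) as [E|E]; move/asboolP: E; auto. }
  assert (UC : is_con U).
  { split; [|split; [|split]].
    - intros u; left; auto.
    - intros u v [->|[s [Cs Hs]]]; [left; auto|right; exists s; split; auto].
      apply (proj1 (proj2 (proj1 (proj2_sig s)))), Hs.
    - intros u v w [->|[s1 [C1 H1]]] [->|[s2 [C2 H2]]]; [left; auto|right; eauto|right; eauto|].
      right. destruct (tot s1 s2 C1 C2) as [E|E].
      + exists s2; split; auto. apply (proj1 (proj2 (proj2 (proj1 (proj2_sig s2)))) _ v); auto.
      + exists s1; split; auto. apply (proj1 (proj2 (proj2 (proj1 (proj2_sig s1)))) _ v); auto.
    - intros f a b Hab.
      assert (G : forall m, (m <= arity f)%coq_nat -> (forall i : 'I_(arity f), (i < m)%coq_nat -> a i = b i) \/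
                 exists s, Ch s /\ forall i : 'I_(arity f), (i < m)%coq_nat -> proj1_sig s (a i) (b i)).
      { induction m as [|m IH]; intros Hm.
        - left; intros i Hi; exfalso; inversion Hi.
        - assert (Hm' : (m < arity f)%N) by (apply/ltP; exact Hm).
          pose i0 := Ordinal Hm'.
          assert (Ei : forall i : 'I_(arity f), (i < m.+1)%coq_nat -> (i < m)%coq_nat \/ i = i0).
          { intros i Hi. destruct (PeanoNat.Nat.eq_dec i m) as [E|E]; [right; apply val_inj; exact E|left; lia]. }
          destruct (IH ltac:(lia)) as [I1|[s [Cs Is]]]; destruct (Hab i0) as [E0|[s0 [C0 H0]]].
          + left; intros i Hi; destruct (Ei i Hi) as [| ->]; auto.
          + right; exists s0; split; auto; intros i Hi; destruct (Ei i Hi) as [Hi' | ->]; auto.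
            rewrite (I1 i Hi'); apply (proj1 (proj1 (proj2_sig s0))).
          + right; exists s; split; auto; intros i Hi; destruct (Ei i Hi) as [Hi' | ->]; auto.
            rewrite E0; apply (proj1 (proj1 (proj2_sig s))).
          + right. destruct (tot s s0 Cs C0) as [E|E].
            * exists s0; split; auto; intros i Hi; destruct (Ei i Hi) as [Hi' | ->]; auto.
            * exists s; split; auto; intros i Hi; destruct (Ei i Hi) as [Hi' | ->]; auto. }
      destruct (G (arity f) (le_n _)) as [G1|[s [Cs Gs]]].
      + left; f_equal; apply functional_extensionality; intros i; apply G1; apply/ltP; apply (ltn_ord i).
      + right; exists s; split; auto. apply (proj2 (proj2 (proj2 (proj1 (proj2_sig s))))).
        intros i; apply Gs; apply/ltP; apply (ltn_ord i). }
  assert (UA : forall n, ~ incl (al n) U).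
  { intros n Hi. destruct (F4 n U UC Hi) as [E|[s [Cs Hs]]].
    - exact (proj2_sig (sq n) E).
    - apply (proj2 (proj2_sig s) n). apply Cg_least; [exact (proj1 (proj2_sig s))|exact Hs]. }
  exists (exist _ U (conj UC UA)). intros s Cs; apply/asboolP; intros u v Huv; right; exists s; auto.
- destruct t as [phi [Hphi Hav]].
  assert (Hmax : forall s : T, incl phi (proj1_sig s) -> incl (proj1_sig s) phi).
  { intros s Hs. have := Ht s. move=> Hts. move: (Hts (introT (asboolP _) Hs)) => /asboolP. auto. }
  assert (Hprime : is_prime phi).
  { split; [exact Hphi|split].
    - intros Hq; apply (Hav 0); intros u v _; apply Hq; exact I.
    - intros be ga Hb Hg Hs.
      destruct (classic (incl be phi)) as [|nb]; [left; auto|].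
      destruct (classic (incl ga phi)) as [|ng]; [right; auto|].
      exfalso.
      assert (Cl : forall de, is_con de -> ~ incl de phi -> exists n, incl (al n) (cjoin2 de phi)).
      { intros de Hde Hn. apply NNPP; intros Hno.
        assert (Hav' : forall n, ~ incl (al n) (cjoin2 de phi)) by (intros n Hi; apply Hno; eauto).
        pose s := exist _ (cjoin2 de phi) (conj (cjoin_con _ _) Hav') : T.
        assert (E := Hmax s (cjoin_ub _ (fun b : bool => if b then de else phi) false)).
        apply Hn; intros u v Hu; apply E, (cjoin_ub _ (fun b : bool => if b then de else phi) true), Hu. }
      destruct (Cl be Hb nb) as [n Hn], (Cl ga Hg ng) as [m Hm].
      apply (Hav (Nat.max n m).+1).
      intros u v Hu. apply (comm_join_phi be ga phi Hc Hd Hb Hg Hphi Hs).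
      apply F1 in Hu. revert Hu; apply comm_mono.
      + intros p q Hpq; apply Hn; apply (F3 n (Nat.max n m)); [lia|exact Hpq].
      + intros p q Hpq; apply Hm; apply (F3 m (Nat.max n m)); [lia|exact Hpq]. }
  assert (DI : incl (@Delta S A) phi) by (intros u v E; unfold Delta in E; subst; apply (proj1 Hphi)).
  assert (Hxy := Hr phi Hprime DI).
  apply (Hav 0); apply Cg_least; [exact Hphi|exact Hxy].
Qed.

Theorem mainTheorem6 (S : signature) (A : algebra S) :
  comm_commutative A ->
  comm_join_distributive A ->
  (forall theta, is_con theta -> req (comm theta (@Nabla S A)) theta) ->
  (strongly_Baer A -> semiprime A) /\
  (Baer A -> principal_commutators A -> semiprime A).
Proof.
intros Hc Hd Hn. split.
- intros HB. apply semiprime_of; auto. intros a b Hz.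
  apply (key (Cg a b) Hc Hd Hn (cjoin_con _ _) (HB _ (cjoin_con _ _)) Hz), Cg_in.
- intros HB _. apply semiprime_of; auto. intros a b Hz.
  assert (Hp : is_pcon (Cg a b)) by (exists a, b; intros u v; tauto).
  apply (key (Cg a b) Hc Hd Hn (cjoin_con _ _) (HB _ Hp) Hz), Cg_in.
Qed.
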